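(* Let $A\in M_2(\mathbb{R})$ and let $\mathcal{L}_A:\mathcal{S}^2\to\mathcal{S}^2$ be the Lyapunov map $\mathcal{L}_A(X)=AX+XA^t$. If $\mathcal{L}_A(CP_2)\subseteq CP_2$, then $A=\alpha I$ for some $\alpha>0$, and hence $\mathcal{L}_A$ is a constant multiple of the identity map.
   Context: $\mathcal{S}^n$ denotes the space of real symmetric $n\times n$ matrices. $CP_n=\{BB^t: B \text{ a real entrywise nonnegative } n\times k \text{ matrix for some } k\}$ is the cone of completely positive matrices; for $n=2$ it equals the set of symmetric matrices that are both positive semidefinite and entrywise nonnegative. *)

(* Defs.v *)
From HB Require Import structures.
From mathcomp Require Import all_boot all_order all_algebra.
Set Implicit Arguments. Unset Strict Implicit. Unset Printing Implicit Defensive.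
Import Order.TTheory GRing.Theory Num.Theory.
Local Open Scope ring_scope.

Definition completely_positive (R : realFieldType) (n : nat) (X : 'M[R]_n) : Prop :=
  exists (k : nat) (B : 'M[R]_(n, k)),
    (forall i j, 0 <= B i j) /\ X = B *m B^T.

Definition lyapunov (R : realFieldType) (n : nat) (A X : 'M[R]_n) : 'M[R]_n :=
  A *m X + X *m A^T.

(* Main.v *)
Require Import Defs.
From HB Require Import structures.
From mathcomp Require Import all_boot all_order all_algebra.
From mathcomp Require Import ring lra.
Import Order.TTheory GRing.Theory Num.Theory.
Local Open Scope ring_scope.

Lemma cp_entry (R : realFieldType) (M : 'M[R]_2) :
  completely_positive M -> forall i j, 0 <= M i j.
Proof.
move=> [k [B [HB ->]]] i j; rewrite !mxE; apply: sumr_ge0 => l _.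
by rewrite mxE; apply: mulr_ge0.
Qed.

Lemma cp_cs (R : realFieldType) (M : 'M[R]_2) :
  completely_positive M -> M 0 1 ^+ 2 <= M 0 0 * M 1 1.
Proof.
move=> [k [B [HB ->]]].
have E : forall i j, (B *m B^T) i j = \sum_l B i l * B j l.
  by move=> i j; rewrite mxE; apply: eq_bigr => l _; rewrite mxE.
rewrite !E.
set p := \sum_l B 0 l * B 0 l; set q := \sum_l B 0 l * B 1 l;
  set r := \sum_l B 1 l * B 1 l.
have Q : forall x y, 0 <= x ^+ 2 * p + 2 * x * y * q + y ^+ 2 * r.
  move=> x y.
  have -> : x ^+ 2 * p + 2 * x * y * q + y ^+ 2 * r
      = \sum_l (x * B 0 l + y * B 1 l) ^+ 2.
    rewrite /p /q /r !mulr_sumr -!big_split /=; apply: eq_bigr => l _; ring.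
  by apply: sumr_ge0 => l _; apply: sqr_ge0.
have p0 : 0 <= p by apply: sumr_ge0 => l _; by rewrite -expr2 sqr_ge0.
have [pz|pp] := eqVneq p 0.
  have Bz : forall l, B 0 l = 0.
    move=> l; move/eqP: pz; rewrite psumr_eq0 => [/allP H|l' _].
      by move: (H l (mem_index_enum l)); rewrite /= mulf_eq0 orbb => /eqP.
    by rewrite -expr2 sqr_ge0.
  have -> : q = 0 by rewrite /q big1 // => l _; rewrite Bz mul0r.
  by rewrite pz mul0r expr2 mul0r.
have pg : 0 < p by rewrite lt_def pp p0.
have := Q (- q) p.
nra.
Qed.

Lemma cp_rank1 (R : realFieldType) (x y : R) : 0 <= x -> 0 <= y ->
  let u : 'cV[R]_2 := \col_i (if i == 0 then x else y) in
  completely_positive (u *m u^T).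
Proof.
move=> hx hy u; exists 1%N, u; split => // i j; rewrite mxE.
by case: ifP.
Qed.

Lemma sym_rank1 (R : realFieldType) (u : 'cV[R]_2) : (u *m u^T)^T = u *m u^T.
Proof. by rewrite trmx_mul trmxK. Qed.

Lemma ord1E : lift ord0 (ord0 : 'I_1) = 1 :> 'I_2.
Proof. by apply/val_inj. Qed.

Lemma lyap_entries (R : realFieldType) (A : 'M[R]_2) (x y : R) :
  let u : 'cV[R]_2 := \col_i (if i == 0 then x else y) in
  let L := lyapunov A (u *m u^T) in
  [/\ L 0 0 = 2 * x * (A 0 0 * x + A 0 1 * y),
      L 0 1 = y * (A 0 0 * x + A 0 1 * y) + x * (A 1 0 * x + A 1 1 * y) &
      L 1 1 = 2 * y * (A 1 0 * x + A 1 1 * y)].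
Proof.
move=> u L; rewrite /L /lyapunov /u.
split; rewrite !mxE !big_ord_recl !big_ord0 /= !mxE !big_ord_recl !big_ord0 /= !mxE /=
  ?ord1E; ring.
Qed.

Theorem mainTheorem2 (R : realFieldType) (A : 'M[R]_2) :
  A != 0 ->
  (forall X : 'M[R]_2, X^T = X -> completely_positive X ->
     completely_positive (lyapunov A X)) ->
  exists alpha : R, 0 < alpha /\ A = alpha%:M /\
    (forall X : 'M[R]_2, lyapunov A X = (2 * alpha) *: X).
Proof.
move=> A0 H.
have T : forall x y : R, 0 <= x -> 0 <= y ->
    let L := lyapunov A ((\col_i (if i == 0 then x else y)) *m (\col_i (if i == 0 then x else y))^T) in
    [/\ 0 <= L 0 0, L 0 1 ^+ 2 <= L 0 0 * L 1 1 & 0 <= L 1 1].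
  move=> x y hx hy L.
  have cp : completely_positive L by apply: H; [apply: sym_rank1 | apply: cp_rank1].
  by split; [apply: cp_entry | apply: cp_cs | apply: cp_entry].
have [E00 E01 E11] := lyap_entries _ A 1 0.
have [a0 cs1 _] := T 1 0 ler01 (lexx 0).
rewrite E00 E01 E11 in a0 cs1.
have [F00 F01 F11] := lyap_entries _ A 0 1.
have [_ cs2 d0] := T 0 1 (lexx 0) ler01.
rewrite F00 F01 F11 in d0 cs2.
have [G00 G01 G11] := lyap_entries _ A 1 1.
have [_ cs3 _] := T 1 1 ler01 ler01.
rewrite G00 G01 G11 in cs3.
set a := A 0 0 in a0 cs1 cs2 cs3; set b := A 0 1 in a0 cs1 cs2 cs3;
set c := A 1 0 in a0 cs1 cs2 cs3 d0; set d := A 1 1 in a0 cs1 cs2 cs3 d0.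
have c0 : c = 0 by nra.
have b0 : b = 0 by nra.
have ad : a = d by nra.
have AE : A = a%:M.
  apply/matrixP => i j; rewrite mxE.
  have I2 : forall i : 'I_2, i = 0 \/ i = 1.
    by case=> [[|[|//]] hi]; [left|right]; apply/val_inj.
  by case: (I2 i) => ->; case: (I2 j) => -> /=; rewrite ?mulr1n ?mulr0n.
have ag : 0 <= a by nra.
exists a; split.
  rewrite lt_def ag andbT; apply: contra A0 => /eqP az.
  by rewrite AE az; apply/eqP/matrixP => i j; rewrite !mxE mul0rn.
split => // X.
by rewrite /lyapunov AE tr_scalar_mx mul_scalar_mx mul_mx_scalar -scalerDl mulr2n mulrDl mul1r.
Qed.
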